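(* Let $0<\alpha\leqslant1$. Define functions on $[1,\infty)$ recursively by $f_0(x)\equiv1$ and, for $k\geqslant0$, $$f_{k+1}(x)=\max\{y\in(0,1]:\ F_k(y)=\alpha x\},\qquad F_k(y)=\frac1y-y-\frac{1-\alpha}{f_k(1/y)}+f_k(1/y)\quad(0<y\leqslant1).$$ Then the sequence $\{f_k\}$ is well defined and: (a) for every $k\geqslant1$, $f_k$ is a strictly decreasing smooth function on $[1,\infty)$ with $f_k(1)=1$, $\lim_{x\to\infty}f_k(x)=0$, and $f_k(x)>1/x$ for all $x>1$; (b) for every $k\geqslant0$, $F_k$ is a strictly decreasing smooth function on $(0,1]$ with $\lim_{y\to0^+}F_k(y)=\infty$ and $F_k(1)=\alpha$; (c) for all $k\geqslant0$ and $x>1$, $f_{k+1}(x)<f_k(x)$; (d) $\{f_k\}$ converges pointwise on $[1,\infty)$ to $$f_\infty(x)=\max\left\{\frac1x,\ \frac12\left(\alpha(2-x)+\sqrt{\alpha^2(2-x)^2+4(1-\alpha)}\right)\right\}.$$ *)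

(* Defs.v *)
From Stdlib Require Import Reals.
From Coquelicot Require Import Coquelicot.
Open Scope R_scope.

Definition Fk (alpha : R) (fk : R -> R) (y : R) : R :=
  / y - y - (1 - alpha) / fk (/ y) + fk (/ y).

Definition sol_set (alpha : R) (fk : R -> R) (x : R) (y : R) : Prop :=
  0 < y <= 1 /\ Fk alpha fk y = alpha * x.

(* f_{k+1}(x) := max of the solution set, realised as its least upper bound;
   that this sup is attained (a genuine max) is part of the theorem. *)
Definition next_f (alpha : R) (fk : R -> R) (x : R) : R :=
  real (Lub_Rbar (sol_set alpha fk x)).

Fixpoint fseq (alpha : R) (k : nat) : R -> R :=
  match k with
  | O => fun _ => 1
  | S k' => next_f alpha (fseq alpha k')
  end.

Definition Fseq (alpha : R) (k : nat) : R -> R := Fk alpha (fseq alpha k).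

Definition is_max_of (E : R -> Prop) (y : R) : Prop :=
  E y /\ forall z, E z -> z <= y.

Definition smooth_on_Ici1 (g : R -> R) : Prop :=
  exists (h : R -> R) (eps : R), 0 < eps /\
    (forall x, 1 <= x -> h x = g x) /\
    (forall (n : nat) x, 1 - eps < x -> ex_derive_n h n x).

Definition smooth_on_Ioc01 (g : R -> R) : Prop :=
  exists (h : R -> R) (eps : R), 0 < eps /\
    (forall y, 0 < y <= 1 -> h y = g y) /\
    (forall (n : nat) y, 0 < y < 1 + eps -> ex_derive_n h n y).

Definition f_inf (alpha : R) (x : R) : R :=
  Rmax (/ x)
    ((alpha * (2 - x) + sqrt (alpha ^ 2 * (2 - x) ^ 2 + 4 * (1 - alpha))) / 2).

(* Main.v *)
Require Import Defs.
From Stdlib Require Import Reals Lra Lia.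
From Coquelicot Require Import Coquelicot.
Open Scope R_scope.

Definition Ck (U : R -> Prop) (n : nat) (f : R -> R) : Prop :=
  forall k x, (k <= n)%nat -> U x -> ex_derive_n f k x.

Definition Cinf (U : R -> Prop) (f : R -> R) : Prop := forall n, Ck U n f.

Lemma Derive_n_S_eq f j y : Derive_n (Derive f) j y = Derive_n f (S j) y.
Proof.
  revert y; induction j; intro y; simpl.
  - apply Derive_ext; reflexivity.
  - apply Derive_ext; intro t. rewrite IHj. reflexivity.
Qed.

Lemma Ck_S (U : R -> Prop) n f f' : open U ->
  (forall x, U x -> is_derive f x (f' x)) -> Ck U n f' -> Ck U (S n) f.
Proof.
  intros HU Hd Hc.
  assert (Heq : forall j y, U y -> Derive_n f (S j) y = Derive_n f' j y).
  { induction j; intros y Uy; simpl.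
    - apply is_derive_unique. apply Hd; auto.
    - apply Derive_ext_loc.
      apply (filter_imp U); [|apply HU; auto].
      intros z Uz. simpl in IHj. apply IHj; auto. }
  intros k x Hk Ux. destruct k as [|j]; simpl; auto.
  destruct j as [|i].
  - simpl. eexists. apply Hd; auto.
  - assert (H1 : ex_derive_n f' (S i) x) by (apply Hc; auto; lia).
    simpl in H1.
    apply (ex_derive_ext_loc (Derive_n f' i)).
    + apply (filter_imp U); [|apply HU; auto].
      intros z Uz. symmetry. apply (Heq i z Uz).
    + exact H1.
Qed.

Lemma Ck_S_inv (U : R -> Prop) n f :
  Ck U (S n) f -> (forall x, U x -> is_derive f x (Derive f x)) /\ Ck U n (Derive f).
Proof.
  intros Hc. split.
  - intros x Ux. apply Derive_correct.
    assert (H1 := Hc 1%nat x ltac:(lia) Ux). simpl in H1.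
    apply (ex_derive_ext (fun y => f y)); auto.
  - intros k x Hk Ux. destruct k as [|j]; simpl; auto.
    assert (H1 := Hc (S (S j)) x ltac:(lia) Ux). simpl in H1.
    apply (ex_derive_ext (Derive_n f (S j))); [|exact H1].
    intro t. rewrite <- Derive_n_S_eq. reflexivity.
Qed.

Lemma Ck_mono U n m f : (m <= n)%nat -> Ck U n f -> Ck U m f.
Proof. intros Hm Hc k x Hk Ux. apply Hc; auto; lia. Qed.

Lemma Ck_0 U f : Ck U 0 f.
Proof. intros k x Hk Ux. destruct k; simpl; auto; lia. Qed.

Lemma Ck_ext U n f g : open U -> (forall x, U x -> f x = g x) -> Ck U n f -> Ck U n g.
Proof.
  intros HU. revert f g. induction n; intros f g Heq Hc.
  - apply Ck_0.
  - destruct (Ck_S_inv _ _ _ Hc) as [Hd Hc'].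
    apply (Ck_S U n g (Derive f) HU); auto.
    intros x Ux. apply (is_derive_ext_loc f); [|apply Hd; auto].
    apply (filter_imp U); [|apply HU; auto]. exact Heq.
Qed.

Lemma Ck_const U n c : open U -> Ck U n (fun _ => c).
Proof.
  intros HU. revert c. induction n; intro c. apply Ck_0.
  apply (Ck_S U n _ (fun _ => 0) HU); auto.
  intros x _. auto_derive; auto.
Qed.

Lemma Ck_id U n : open U -> Ck U n (fun x => x).
Proof.
  intros HU. destruct n. apply Ck_0.
  apply (Ck_S U n _ (fun _ => 1) HU); auto.
  intros x _. auto_derive; auto. apply Ck_const; auto.
Qed.

Lemma Ck_plus U n f g : open U -> Ck U n f -> Ck U n g -> Ck U n (fun x => f x + g x).
Proof.
  intros HU. revert f g. induction n; intros f g Hf Hg. apply Ck_0.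
  destruct (Ck_S_inv _ _ _ Hf) as [Hdf Hf'].
  destruct (Ck_S_inv _ _ _ Hg) as [Hdg Hg'].
  apply (Ck_S U n _ (fun x => Derive f x + Derive g x) HU); auto.
  intros x Ux. apply (is_derive_plus f g); auto.
Qed.

Lemma Ck_opp U n f : open U -> Ck U n f -> Ck U n (fun x => - f x).
Proof.
  intros HU. revert f. induction n; intros f Hf. apply Ck_0.
  destruct (Ck_S_inv _ _ _ Hf) as [Hdf Hf'].
  apply (Ck_S U n _ (fun x => - Derive f x) HU); auto.
  intros x Ux. apply (is_derive_opp f); auto.
Qed.

Lemma Ck_mult U n f g : open U -> Ck U n f -> Ck U n g -> Ck U n (fun x => f x * g x).
Proof.
  intros HU. revert f g. induction n; intros f g Hf Hg. apply Ck_0.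
  destruct (Ck_S_inv _ _ _ Hf) as [Hdf Hf'].
  destruct (Ck_S_inv _ _ _ Hg) as [Hdg Hg'].
  apply (Ck_S U n _ (fun x => Derive f x * g x + f x * Derive g x) HU); auto.
  - intros x Ux. apply (is_derive_mult f g); auto. intros; apply Rmult_comm.
  - apply Ck_plus; auto; apply IHn; auto.
    all: try (apply (Ck_mono U (S n) n); [lia|assumption]).
    all: idtac.
Qed.

Lemma Ck_inv U n f : open U -> (forall x, U x -> f x <> 0) -> Ck U n f -> Ck U n (fun x => / f x).
Proof.
  intros HU Hnz. revert f Hnz. induction n; intros f Hnz Hf. apply Ck_0.
  destruct (Ck_S_inv _ _ _ Hf) as [Hdf Hf'].
  apply (Ck_S U n _ (fun x => - Derive f x * (/ f x * / f x)) HU); auto.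
  - intros x Ux. eapply is_derive_ext. reflexivity.
    replace (- Derive f x * (/ f x * / f x)) with (- Derive f x / f x ^ 2).
    + apply is_derive_inv; auto.
    + assert (f x <> 0) by auto. field. auto.
  - apply Ck_mult; auto. apply Ck_opp; auto.
    assert (Hi : Ck U n (fun x => / f x)) by (apply IHn; auto; apply (Ck_mono U (S n) n); [lia|assumption]).
    apply Ck_mult; auto.
Qed.

Lemma Ck_comp U V n f g : open U -> open V -> (forall x, U x -> V (g x)) ->
  Ck V n f -> Ck U n g -> Ck U n (fun x => f (g x)).
Proof.
  intros HU HV Hgv. revert f. induction n; intros f Hf Hg. apply Ck_0.
  destruct (Ck_S_inv _ _ _ Hf) as [Hdf Hf'].
  destruct (Ck_S_inv _ _ _ Hg) as [Hdg Hg'].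
  apply (Ck_S U n _ (fun x => Derive f (g x) * Derive g x) HU); auto.
  - intros x Ux. eapply is_derive_ext. reflexivity.
    rewrite Rmult_comm. apply (is_derive_comp f g); auto.
  - apply Ck_mult; auto. apply IHn; auto. apply (Ck_mono U (S n) n); [lia|assumption].
Qed.
Lemma cont_eps f x : continuous f x -> forall eps, 0 < eps ->
  exists d, 0 < d /\ forall y, Rabs (y - x) < d -> Rabs (f y - f x) < eps.
Proof.
  intros H eps Heps.
  assert (L : locally (f x) (fun z => Rabs (z - f x) < eps)).
  { exists (mkposreal eps Heps). intros z Hz. exact Hz. }
  destruct (H _ L) as [d Hd]. exists d. split. apply cond_pos.
  intros y Hy. apply (Hd y). exact Hy.
Qed.

Lemma open_eps (W : R -> Prop) x : open W -> W x ->
  exists d, 0 < d /\ forall y, Rabs (y - x) < d -> W y.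
Proof.
  intros HW Wx. destruct (HW x Wx) as [d Hd]. exists d. split. apply cond_pos.
  intros y Hy. apply Hd. exact Hy.
Qed.

Lemma inverse_derive (F g : R -> R) (W : R -> Prop) x0 D :
  open W -> W x0 -> (forall x, W x -> F (g x) = x) -> continuous g x0 ->
  is_derive F (g x0) D -> D <> 0 -> is_derive g x0 (/ D).
Proof.
  intros HW Wx0 Hinv Hc HF HD.
  apply is_derive_Reals. apply is_derive_Reals in HF.
  intros eps Heps.
  assert (HaD : 0 < Rabs D) by (apply Rabs_pos_lt; auto).
  set (e1 := Rmin (Rabs D / 2) (eps * (Rabs D * Rabs D) / 2)).
  assert (He1 : 0 < e1).
  { unfold e1. apply Rmin_pos. lra. apply Rmult_lt_0_compat; [|lra].
    apply Rmult_lt_0_compat; auto. apply Rmult_lt_0_compat; auto. }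
  destruct (HF e1 He1) as [d1 Hd1].
  destruct (cont_eps g x0 Hc d1 (cond_pos d1)) as [d2 [Hd2 Hd2']].
  destruct (open_eps W x0 HW Wx0) as [d3 [Hd3 Hd3']].
  assert (Hd : 0 < Rmin d2 d3) by (apply Rmin_pos; auto).
  exists (mkposreal _ Hd). intros h Hh0 Hh. simpl in Hh.
  assert (Hh2 : Rabs h < d2) by (eapply Rlt_le_trans; [exact Hh|apply Rmin_l]).
  assert (Hh3 : Rabs h < d3) by (eapply Rlt_le_trans; [exact Hh|apply Rmin_r]).
  assert (Wxh : W (x0 + h)) by (apply Hd3'; replace (x0 + h - x0) with h by ring; auto).
  set (k := g (x0 + h) - g x0).
  assert (Hk : Rabs k < d1).
  { unfold k. apply Hd2'. replace (x0 + h - x0) with h by ring; auto. }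
  assert (Hk0 : k <> 0).
  { intro E. apply Hh0. unfold k in E.
    assert (g (x0 + h) = g x0) by lra.
    assert (F (g (x0 + h)) = F (g x0)) by (rewrite H; auto).
    rewrite !Hinv in H0; auto. lra. }
  assert (Hq := Hd1 k Hk0 Hk).
  replace (g x0 + k) with (g (x0 + h)) in Hq by (unfold k; ring).
  rewrite !Hinv in Hq; auto.
  replace (x0 + h - x0) with h in Hq by ring.
  set (Q := h / k) in *.
  assert (HQ0 : Rabs D / 2 <= Rabs Q).
  { assert (Rabs (Q - D) < Rabs D / 2) by (eapply Rlt_le_trans; [exact Hq| apply Rmin_l]).
    assert (Rabs D <= Rabs Q + Rabs (Q - D)).
    { replace D with (Q - (Q - D)) at 1 by ring.
      eapply Rle_trans. apply Rabs_triang. rewrite Rabs_Ropp. lra. }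
    lra. }
  assert (Qnz : Q <> 0).
  { intro E. rewrite E, Rabs_R0 in HQ0. lra. }
  replace (k / h - / D) with ((D - Q) / (Q * D)).
  2:{ unfold Q. field. repeat split; auto. }
  assert (Ha : Rabs (D - Q) < eps * (Rabs D * Rabs D) / 2).
  { rewrite Rabs_minus_sym. eapply Rlt_le_trans; [exact Hq| apply Rmin_r]. }
  unfold Rdiv. rewrite Rabs_mult, Rabs_inv, Rabs_mult.
  set (a := Rabs (D - Q)) in *. set (b := Rabs Q) in *. set (c := Rabs D) in *.
  assert (0 < b * c) by (apply Rmult_lt_0_compat; lra).
  apply (Rmult_lt_reg_r (b * c)); auto.
  replace (a * / (b * c) * (b * c)) with a by (field; split; lra).
  assert (eps * (c * c) / 2 <= eps * (b * c)).
  { assert (0 <= eps * c) by nra. nra. }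
  lra.
Qed.

Lemma Cinf_inverse (F g : R -> R) (V W : R -> Prop) :
  open V -> open W -> Cinf V F -> (forall y, V y -> Derive F y <> 0) ->
  (forall x, W x -> V (g x)) -> (forall x, W x -> F (g x) = x) ->
  (forall x, W x -> continuous g x) -> Cinf W g.
Proof.
  intros HV HW HF HD Hgv Hinv Hc n. induction n. apply Ck_0.
  destruct (Ck_S_inv V n F (HF (S n))) as [HdF HF'].
  apply (Ck_S W n g (fun x => / Derive F (g x)) HW).
  - intros x Wx. apply (inverse_derive F g W); auto.
  - apply (Ck_inv W n (fun x => Derive F (g x)) HW).
    + intros x Wx; apply HD; auto.
    + apply (Ck_comp W V n (Derive F) g); auto.
Qed.

Definition Gf (a : R) (f : R -> R) (u : R) : R := f u - (1 - a) / f u + a * u.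

Lemma Psi_le a s t : a <= 1 -> 0 < s -> s <= t -> s - (1 - a) / s <= t - (1 - a) / t.
Proof.
  intros Ha Hs Hst.
  assert (/ t <= / s) by (apply Rinv_le_contravar; lra).
  unfold Rdiv. assert ((1 - a) * / t <= (1 - a) * / s) by (apply Rmult_le_compat_l; lra).
  lra.
Qed.

Lemma Psi_lt a s t : a <= 1 -> 0 < s -> s < t -> s - (1 - a) / s < t - (1 - a) / t.
Proof.
  intros Ha Hs Hst.
  assert (/ t <= / s) by (apply Rinv_le_contravar; lra).
  unfold Rdiv. assert ((1 - a) * / t <= (1 - a) * / s) by (apply Rmult_le_compat_l; lra).
  lra.
Qed.

Lemma Psi_inj a s t : a <= 1 -> 0 < s -> 0 < t -> s - (1 - a) / s = t - (1 - a) / t -> s = t.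
Proof.
  intros Ha Hs Ht E. destruct (Rtotal_order s t) as [H|[H|H]]; auto.
  - apply (Psi_lt a) in H; auto. lra.
  - apply (Psi_lt a) in H; auto. lra.
Qed.

Lemma F_form a f y : 0 < y -> Fk a f y = (1 - a) / y - y + Gf a f (/ y).
Proof. intros Hy. unfold Fk, Gf, Rdiv. ring. Qed.

Definition Pinv (a : R) (f : R -> R) : Prop :=
  (forall x, 1 <= x -> / x <= f x <= 1) /\
  (forall x, 1 < x -> / x < f x) /\
  f 1 = 1 /\
  (forall u v, 1 <= u -> u <= v -> Gf a f u <= Gf a f v) /\
  (forall u v, 1 <= u -> u <= v -> f v <= f u) /\
  (forall u v X, 1 <= u -> u <= v -> v <= X ->
      (/ f v - / f u) * (/ (X * X) + 1 - a) <= a * (v - u)) /\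
  (exists h eps, 0 < eps < 1 /\ (forall x, 1 <= x -> h x = f x) /\
      (forall x, 1 - eps < x -> 0 < h x) /\ Cinf (fun x => 1 - eps < x) h).

Lemma f_pos a f x : Pinv a f -> 1 <= x -> 0 < f x.
Proof.
  intros [P1 _] Hx. destruct (P1 x Hx). assert (0 < / x) by (apply Rinv_0_lt_compat; lra). lra.
Qed.


Lemma G1 a f : Pinv a f -> Gf a f 1 = 2 * a.
Proof. intros (_ & _ & P2 & _). unfold Gf. rewrite P2. field. Qed.

Lemma G_lower a f u : 0 < a <= 1 -> Pinv a f -> 1 <= u -> / u - (1 - a) * u + a * u <= Gf a f u.
Proof.
  intros Ha HP Hu. destruct HP as [P1 _].
  unfold Gf. destruct (P1 u Hu) as [Hl Hr].
  assert (Hi : 0 < / u) by (apply Rinv_0_lt_compat; lra).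
  assert (H := Psi_le a (/ u) (f u) ltac:(lra) Hi Hl).
  replace ((1 - a) / / u) with ((1 - a) * u) in H by (field; lra). lra.
Qed.

Lemma G_lower_strict a f u : 0 < a <= 1 -> Pinv a f -> 1 < u -> / u - (1 - a) * u + a * u < Gf a f u.
Proof.
  intros Ha HP Hu. destruct HP as [P1 [P1' _]].
  unfold Gf. assert (H := P1' u Hu).
  assert (Hi : 0 < / u) by (apply Rinv_0_lt_compat; lra).
  assert (H2 := Psi_lt a (/ u) (f u) ltac:(lra) Hi H).
  replace ((1 - a) / / u) with ((1 - a) * u) in H2 by (field; lra). lra.
Qed.

Lemma F_dec a f y z : 0 < a <= 1 -> Pinv a f -> 0 < y -> y <= z -> z <= 1 ->
  Fk a f z + (z - y) <= Fk a f y.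
Proof.
  intros Ha HP Hy Hyz Hz.
  rewrite !F_form by lra.
  destruct HP as (_ & _ & _ & P3 & _).
  assert (/ z <= / y) by (apply Rinv_le_contravar; lra).
  assert (1 <= / z) by (rewrite <- Rinv_1; apply Rinv_le_contravar; lra).
  assert (Gf a f (/ z) <= Gf a f (/ y)) by (apply P3; lra).
  assert ((1 - a) / z <= (1 - a) / y) by (unfold Rdiv; apply Rmult_le_compat_l; lra).
  lra.
Qed.

Lemma F_lower a f y : 0 < a <= 1 -> Pinv a f -> 0 < y <= 1 -> a / y <= Fk a f y.
Proof.
  intros Ha HP Hy. rewrite F_form by lra.
  assert (1 <= / y) by (rewrite <- Rinv_1; apply Rinv_le_contravar; lra).
  assert (H1 := G_lower a f (/ y) Ha HP H).
  rewrite Rinv_inv in H1. unfold Rdiv in *. nra.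
Qed.

Lemma F_lower_strict a f y : 0 < a <= 1 -> Pinv a f -> 0 < y < 1 -> a / y < Fk a f y.
Proof.
  intros Ha HP Hy. rewrite F_form by lra.
  assert (1 < / y) by (rewrite <- Rinv_1; apply Rinv_lt_contravar; nra).
  assert (H1 := G_lower_strict a f (/ y) Ha HP H).
  rewrite Rinv_inv in H1. unfold Rdiv in *. nra.
Qed.

Lemma F_one a f : Pinv a f -> Fk a f 1 = a.
Proof. intros HP. destruct HP as (_ & _ & P2 & _). unfold Fk. rewrite Rinv_1, P2. field. Qed.

Lemma open_int b : open (fun y => 0 < y /\ y < b).
Proof. apply open_and. apply open_gt. apply open_lt. Qed.

Lemma Ck_sub (U U' : R -> Prop) n f : (forall x, U' x -> U x) -> Ck U n f -> Ck U' n f.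
Proof. intros H Hc k x Hk Ux. apply Hc; auto. Qed.

Lemma Fh_smooth a h eps : 0 < eps < 1 -> (forall x, 1 - eps < x -> 0 < h x) ->
  Cinf (fun x => 1 - eps < x) h -> Cinf (fun y => 0 < y /\ y < / (1 - eps)) (Fk a h).
Proof.
  intros He Hpos Hh n.
  set (V0 := fun y => 0 < y /\ y < / (1 - eps)).
  assert (HV0 : open V0) by apply open_int.
  assert (HV : open (fun x => 1 - eps < x)) by apply open_gt.
  assert (Hinv : forall y, V0 y -> 1 - eps < / y).
  { intros y [Hy1 Hy2]. apply Rinv_lt_contravar in Hy2; [|apply Rmult_lt_0_compat; auto; apply Rinv_0_lt_compat; lra].
    rewrite Rinv_inv in Hy2. lra. }
  assert (C1 : Ck V0 n (fun y => / y)).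
  { apply Ck_inv; auto. intros y [Hy _]; lra. apply Ck_id; auto. }
  assert (C2 : Ck V0 n (fun y => h (/ y))).
  { apply (Ck_comp V0 (fun x => 1 - eps < x) n h (fun y => / y)); auto. }
  assert (C3 : Ck V0 n (fun y => / h (/ y))).
  { apply Ck_inv; auto. intros y Hy. specialize (Hpos _ (Hinv y Hy)). lra. }
  apply (Ck_ext V0 n (fun y => (/ y + - y) + (- ((1 - a) * / h (/ y)) + h (/ y)))); auto.
  - intros y _. unfold Fk, Rdiv, Rminus. ring.
  - apply Ck_plus; auto. apply Ck_plus; auto. apply Ck_opp; auto. apply Ck_id; auto.
    apply Ck_plus; auto. apply Ck_opp; auto. apply Ck_mult; auto. apply Ck_const; auto.
Qed.

Lemma lub_single (E : R -> Prop) z : (forall y, E y <-> y = z) -> real (Lub_Rbar E) = z.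
Proof.
  intros H. rewrite (is_lub_Rbar_unique E (Finite z)); auto.
  split.
  - intros y Ey. apply H in Ey. subst. simpl. lra.
  - intros b Hb. apply Hb. apply H. auto.
Qed.

Lemma ex_derive_cpt f x : ex_derive f x -> continuity_pt f x.
Proof.
  intros [l Hl]. apply derivable_continuous_pt. exists l. apply is_derive_Reals. exact Hl.
Qed.

Lemma Fh_eq a f h y : (forall x, 1 <= x -> h x = f x) -> 0 < y <= 1 -> Fk a h y = Fk a f y.
Proof.
  intros Hh Hy. assert (1 <= / y) by (rewrite <- Rinv_1; apply Rinv_le_contravar; lra).
  unfold Fk. rewrite Hh; auto.
Qed.

Lemma F_strict a f y z : 0 < a <= 1 -> Pinv a f -> 0 < y -> y < z -> z <= 1 -> Fk a f z < Fk a f y.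
Proof. intros. assert (H4 := F_dec a f y z H H0 H1 ltac:(lra) H3). lra. Qed.

Lemma F_unique a f y z : 0 < a <= 1 -> Pinv a f -> 0 < y <= 1 -> 0 < z <= 1 ->
  Fk a f y = Fk a f z -> y = z.
Proof.
  intros Ha HP Hy Hz E. destruct (Rtotal_order y z) as [H|[H|H]]; auto.
  - assert (H1 := F_strict a f y z Ha HP ltac:(lra) H ltac:(lra)). lra.
  - assert (H1 := F_strict a f z y Ha HP ltac:(lra) H ltac:(lra)). lra.
Qed.

Lemma sol_exists a f x : 0 < a <= 1 -> Pinv a f -> 1 <= x ->
  exists y, 0 < y <= 1 /\ / x <= y /\ Fk a f y = a * x.
Proof.
  intros Ha HP Hx.
  destruct (Req_dec x 1) as [E|Hx1].
  { subst. exists 1. rewrite F_one; auto. rewrite Rinv_1. lra. }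
  assert (Hx' : 1 < x) by lra.
  assert (HP' := HP). destruct HP' as (_ & _ & _ & _ & _ & _ & h & eps & He & Hh & Hpos & Hc).
  assert (Hxi : 0 < / x < 1).
  { split. apply Rinv_0_lt_compat; lra. rewrite <- Rinv_1. apply Rinv_lt_contravar; lra. }
  set (phi := fun t => a * x - Fk a h t).
  assert (Hcont : forall t, / x <= t <= 1 -> continuity_pt phi t).
  { intros t Ht. apply ex_derive_cpt. unfold phi.
    apply (ex_derive_minus (fun _ => a * x) (Fk a h)). apply ex_derive_const.
    assert (Hs := Fh_smooth a h eps He Hpos Hc 1%nat).
    assert (Hb : 1 < / (1 - eps)).
    { rewrite <- Rinv_1. apply Rinv_lt_contravar; lra. }
    assert (H1 := Hs 1%nat t ltac:(lia) ltac:(lra)). simpl in H1.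
    exact H1. }
  destruct (Ranalysis5.IVT_interv phi (/ x) 1 Hcont) as [z [Hz Ez]].
  - lra.
  - unfold phi. rewrite Fh_eq with (f := f); auto; [|lra].
    assert (H := F_lower_strict a f (/ x) Ha HP Hxi).
    replace (a / / x) with (a * x) in H by (field; lra). lra.
  - unfold phi. rewrite Fh_eq with (f := f); auto; [|lra].
    rewrite F_one; auto. nra.
  - exists z. unfold phi in Ez. rewrite Fh_eq with (f := f) in Ez; auto; [|lra].
    repeat split; lra.
Qed.

Lemma next_char a f x : 0 < a <= 1 -> Pinv a f -> 1 <= x ->
  0 < next_f a f x <= 1 /\ / x <= next_f a f x /\ Fk a f (next_f a f x) = a * x /\
  (forall z, sol_set a f x z -> z = next_f a f x).
Proof.
  intros Ha HP Hx.
  destruct (sol_exists a f x Ha HP Hx) as [y [Hy1 [Hy2 Hy3]]].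
  assert (E : next_f a f x = y).
  { unfold next_f. apply lub_single. intros z. split.
    - intros [Hz1 Hz2]. apply (F_unique a f); auto. lra.
    - intros ->. split; auto. }
  rewrite E. repeat split; try lra.
  intros z [Hz1 Hz2]. apply (F_unique a f); auto. lra.
Qed.

Lemma inv_ge1 y : 0 < y <= 1 -> 1 <= / y.
Proof. intros. rewrite <- Rinv_1. apply Rinv_le_contravar; lra. Qed.

Lemma next_P1' a f x : 0 < a <= 1 -> Pinv a f -> 1 < x -> / x < next_f a f x.
Proof.
  intros Ha HP Hx. destruct (next_char a f x Ha HP ltac:(lra)) as (H1 & H2 & H3 & _).
  destruct H2 as [H2|H2]; auto. exfalso.
  assert (Hxi : 0 < / x < 1).
  { split. apply Rinv_0_lt_compat; lra. rewrite <- Rinv_1. apply Rinv_lt_contravar; lra. }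
  assert (H := F_lower_strict a f (/ x) Ha HP Hxi).
  replace (a / / x) with (a * x) in H by (field; lra). rewrite <- H2 in H3. lra.
Qed.

Lemma next_P2 a f : 0 < a <= 1 -> Pinv a f -> next_f a f 1 = 1.
Proof.
  intros Ha HP. destruct (next_char a f 1 Ha HP ltac:(lra)) as (_ & _ & _ & H4).
  symmetry. apply H4. split. lra. rewrite F_one; auto. ring.
Qed.

Lemma next_mono_strict a f u v : 0 < a <= 1 -> Pinv a f -> 1 <= u -> u < v ->
  next_f a f v < next_f a f u.
Proof.
  intros Ha HP Hu Huv.
  destruct (next_char a f u Ha HP Hu) as (A1 & _ & A3 & _).
  destruct (next_char a f v Ha HP ltac:(lra)) as (B1 & _ & B3 & _).
  destruct (Rlt_or_le (next_f a f v) (next_f a f u)) as [H|H]; auto.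
  exfalso. assert (H' := F_dec a f (next_f a f u) (next_f a f v) Ha HP ltac:(lra) H ltac:(lra)). rewrite A3, B3 in H'. assert (0 < a * (v - u)) by (apply Rmult_lt_0_compat; lra). lra.
Qed.

Lemma next_G a f x : 0 < a <= 1 -> Pinv a f -> 1 <= x ->
  Gf a (next_f a f) x = Gf a f (/ next_f a f x).
Proof.
  intros Ha HP Hx. destruct (next_char a f x Ha HP Hx) as (A1 & _ & A3 & _).
  rewrite F_form in A3 by lra. unfold Gf at 1. lra.
Qed.

Lemma next_P3 a f u v : 0 < a <= 1 -> Pinv a f -> 1 <= u -> u <= v ->
  Gf a (next_f a f) u <= Gf a (next_f a f) v.
Proof.
  intros Ha HP Hu Huv. rewrite !next_G; auto; try lra.
  destruct (next_char a f u Ha HP Hu) as (A1 & _).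
  destruct (next_char a f v Ha HP ltac:(lra)) as (B1 & _).
  assert (next_f a f v <= next_f a f u).
  { destruct (Req_dec u v). subst; lra. left. apply next_mono_strict; auto; lra. }
  destruct HP as (_ & _ & _ & P3 & _). apply P3. apply inv_ge1; auto.
  apply Rinv_le_contravar; lra.
Qed.

Lemma next_P6 a f u v X : 0 < a <= 1 -> Pinv a f -> 1 <= u -> u <= v -> v <= X ->
  (/ next_f a f v - / next_f a f u) * (/ (X * X) + 1 - a) <= a * (v - u).
Proof.
  intros Ha HP Hu Huv HvX.
  destruct (next_char a f u Ha HP Hu) as (A1 & A2 & A3 & _).
  destruct (next_char a f v Ha HP ltac:(lra)) as (B1 & B2 & B3 & _).
  set (y := next_f a f u) in *. set (z := next_f a f v) in *.
  assert (Hzy : z <= y).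
  { destruct (Req_dec u v). subst u; unfold y, z; lra. left. apply next_mono_strict; auto; lra. }
  rewrite F_form in A3, B3 by lra.
  assert (HG : Gf a f (/ y) <= Gf a f (/ z)).
  { destruct HP as (_ & _ & _ & P3 & _). apply P3. apply inv_ge1; auto.
    apply Rinv_le_contravar; lra. }
  set (u' := / y) in *. set (v' := / z) in *.
  assert (Hu' : 1 <= u') by (apply inv_ge1; auto).
  assert (Huv' : u' <= v') by (apply Rinv_le_contravar; lra).
  assert (Hv'X : v' <= X).
  { unfold v'. apply Rle_trans with v; auto.
    replace v with (/ / v) by (field; lra). apply Rinv_le_contravar; auto.
    apply Rinv_0_lt_compat; lra. }
  assert (Ey : y = / u') by (unfold u'; field; lra).
  assert (Ez : z = / v') by (unfold v'; field; lra).
  assert (E1 : a * (v - u) = (1 - a) * (v' - u') + (/ u' - / v') + (Gf a f v' - Gf a f u')).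
  { replace ((1 - a) / y) with ((1 - a) * u') in A3 by (unfold u', Rdiv; ring).
    replace ((1 - a) / z) with ((1 - a) * v') in B3 by (unfold v', Rdiv; ring).
    rewrite Ey in A3. rewrite Ez in B3. lra. }
  assert (E2 : / u' - / v' = (v' - u') * / (u' * v')) by (field; lra).
  assert (I1 : / (X * X) <= / (u' * v')).
  { apply Rinv_le_contravar. nra. apply Rmult_le_compat; lra. }
  assert (I2 : (v' - u') * / (X * X) <= (v' - u') * / (u' * v')).
  { apply Rmult_le_compat_l; lra. }
  nra.
Qed.

Lemma eps_cont (g : R -> R) x :
  (forall e, 0 < e -> exists d, 0 < d /\ forall y, Rabs (y - x) < d -> Rabs (g y - g x) < e) ->
  continuous g x.
Proof.
  intros H P [e He]. destruct (H e (cond_pos e)) as [d [Hd Hd']].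
  exists (mkposreal d Hd). intros y Hy. apply He. apply Hd'. exact Hy.
Qed.

Lemma deriv_le_m1 (Fh : R -> R) a f y D : 0 < a <= 1 -> Pinv a f ->
  (forall t, 0 < t <= 1 -> Fh t = Fk a f t) -> 0 < y <= 1 ->
  is_derive Fh y D -> D <= -1.
Proof.
  intros Ha HP Heq Hy HD. apply is_derive_Reals in HD.
  destruct (Rle_or_lt D (-1)) as [H|H]; auto. exfalso.
  destruct (HD (D + 1) ltac:(lra)) as [d Hd].
  assert (Hd0 := cond_pos d).
  set (hh := - Rmin (d / 2) (y / 2)).
  assert (Hm : 0 < Rmin (d / 2) (y / 2)) by (apply Rmin_pos; lra).
  assert (Hm1 := Rmin_l (d / 2) (y / 2)). assert (Hm2 := Rmin_r (d / 2) (y / 2)).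
  assert (Hh0 : hh <> 0) by (unfold hh; lra).
  assert (Hhd : Rabs hh < d).
  { unfold hh. rewrite Rabs_Ropp, Rabs_pos_eq; lra. }
  specialize (Hd hh Hh0 Hhd).
  assert (Hz : 0 < y + hh < y) by (unfold hh; lra).
  assert (Hdec := F_dec a f (y + hh) y Ha HP ltac:(lra) ltac:(lra) ltac:(lra)).
  rewrite <- !Heq in Hdec by lra.
  set (N := Fh (y + hh) - Fh y) in *.
  assert (HN : - hh <= N) by (unfold N; lra).
  assert (Hq : N / hh <= -1).
  { assert (hh < 0) by (unfold hh; lra).
    apply (Rmult_le_reg_r (- hh)). lra.
    replace (N / hh * - hh) with (- N) by (field; auto). lra. }
  assert (Habs := Rle_abs (- (N / hh - D))). rewrite Rabs_Ropp in Habs. lra.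
Qed.

Lemma next_P4 a f : 0 < a <= 1 -> Pinv a f ->
  exists h' eps', 0 < eps' < 1 /\ (forall x, 1 <= x -> h' x = next_f a f x) /\
      (forall x, 1 - eps' < x -> 0 < h' x) /\ Cinf (fun x => 1 - eps' < x) h'.
Proof.
  intros Ha HP.
  assert (HP' := HP). destruct HP' as (_ & _ & _ & _ & _ & _ & h & eps & He & Hh & Hpos & Hc).
  set (b := / (1 - eps)).
  assert (Hb : 1 < b) by (unfold b; rewrite <- Rinv_1; apply Rinv_lt_contravar; lra).
  set (Fh := Fk a h).
  set (V0 := fun y => 0 < y /\ y < b).
  assert (HS : Cinf V0 Fh) by (apply Fh_smooth; auto).
  assert (HV0 : open V0) by apply open_int.
  assert (Heq : forall t, 0 < t <= 1 -> Fh t = Fk a f t) by (intros; apply Fh_eq; auto).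
  set (D := Derive Fh).
  destruct (Ck_S_inv V0 1 Fh (HS 2%nat)) as [HdF HD1].
  assert (HDm1 : forall y, 0 < y <= 1 -> D y <= -1).
  { intros y Hy. apply (deriv_le_m1 Fh a f y); auto. apply HdF. unfold V0; lra. }
  assert (HcD : continuous D 1).
  { apply (@ex_derive_continuous R_AbsRing R_NormedModule D 1). assert (H1 := HD1 1%nat 1 ltac:(lia) ltac:(unfold V0; lra)).
    simpl in H1. exact H1. }
  destruct (cont_eps D 1 HcD (1/2) ltac:(lra)) as [d [Hd Hd']].
  set (del := Rmin d (b - 1) / 2).
  assert (Hdel : 0 < del) by (unfold del; assert (0 < Rmin d (b-1)) by (apply Rmin_pos; lra); lra).
  assert (Hdel1 : del < d) by (unfold del; assert (H := Rmin_l d (b - 1)); assert (0 < Rmin d (b-1)) by (apply Rmin_pos; lra); lra).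
  assert (Hdel2 : 1 + del < b) by (unfold del; assert (H := Rmin_r d (b - 1)); assert (0 < Rmin d (b-1)) by (apply Rmin_pos; lra); lra).
  set (b' := 1 + del).
  set (V1 := fun y => 0 < y /\ y < b').
  assert (HV1 : open V1) by apply open_int.
  assert (V10 : forall y, V1 y -> V0 y) by (unfold V1, V0, b'; intros; lra).
  assert (HDneg : forall y, V1 y -> D y < 0).
  { intros y Hy. destruct (Rle_or_lt y 1) as [H|H].
    - assert (D y <= -1) by (apply HDm1; unfold V1 in Hy; lra). lra.
    - assert (H2 : Rabs (y - 1) < d) by (unfold V1, b' in Hy; rewrite Rabs_pos_eq; lra).
      specialize (Hd' y H2). assert (D 1 <= -1) by (apply HDm1; lra).
      assert (H3 := Rle_abs (D y - D 1)). lra. }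
  assert (Hdec : forall y z, 0 < y -> y < z -> z < b' -> Fh z < Fh y).
  { intros y z Hy Hyz Hz.
    assert (H := incr_function (fun t => - Fh t) (Finite 0) (Finite b') (fun t => - D t)).
    assert (Fin : forall x : R, Rbar_lt 0 x -> Rbar_lt x b' -> is_derive (fun t => - Fh t) x (- D x)).
    { intros x H1 H2. simpl in H1, H2. apply (@is_derive_opp R_AbsRing R_NormedModule Fh). apply HdF. apply V10. unfold V1; lra. }
    specialize (H Fin). assert (H' : - Fh y < - Fh z).
    { apply H; simpl; auto. intros x H1 H2. simpl in H1, H2. assert (D x < 0) by (apply HDneg; unfold V1; lra). lra. }
    lra. }
  assert (HF1 : Fh 1 = a) by (rewrite Heq by lra; apply F_one; auto).
  set (m := 1 + del / 2).
  assert (Hm : Fh m < a) by (rewrite <- HF1; apply Hdec; unfold m, b'; lra).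
  set (c := Fh m / a).
  assert (Hc1 : c < 1).
  { unfold c. apply (Rmult_lt_reg_r a); [lra|]. unfold Rdiv. rewrite Rmult_assoc, Rinv_l; lra. }
  set (c' := Rmax c (1/2)).
  assert (Hc'1 : c' < 1) by (unfold c'; apply Rmax_lub_lt; lra).
  assert (Hc'2 : 1/2 <= c') by (unfold c'; apply Rmax_r).
  assert (Hc'3 : c <= c') by (unfold c'; apply Rmax_l).
  assert (Huniq : forall y z, V1 y -> V1 z -> Fh y = Fh z -> y = z).
  { intros y z [Hy1 Hy2] [Hz1 Hz2] E. destruct (Rtotal_order y z) as [H|[H|H]]; auto.
    - assert (Fh z < Fh y) by (apply Hdec; lra). lra.
    - assert (Fh y < Fh z) by (apply Hdec; lra). lra. }
  assert (Hex : forall x, c' < x -> exists y, V1 y /\ Fh y = a * x).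
  { intros x Hx. destruct (Rle_or_lt 1 x) as [H1|H1].
    - destruct (next_char a f x Ha HP H1) as (A1 & _ & A3 & _).
      exists (next_f a f x). split. unfold V1, b'; lra. rewrite Heq; auto.
    - set (phi := fun t => a * x - Fh t).
      assert (Hcont : forall t, 1 <= t <= m -> continuity_pt phi t).
      { intros t Ht. apply ex_derive_cpt. unfold phi.
        apply (ex_derive_minus (fun _ => a * x) Fh). apply ex_derive_const.
        eexists. apply HdF. unfold V0, m, b' in *; lra. }
      destruct (Ranalysis5.IVT_interv phi 1 m Hcont) as [z [Hz Ez]].
      + unfold m; lra.
      + unfold phi. rewrite HF1. nra.
      + unfold phi. assert (a * c < a * x) by (apply Rmult_lt_compat_l; lra).
        unfold c in H. replace (a * (Fh m / a)) with (Fh m) in H by (field; lra). lra.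
      + exists z. unfold phi in Ez. split. unfold V1, b', m in *; lra. lra. }
  set (g := fun x => real (Lub_Rbar (fun y => V1 y /\ Fh y = a * x))).
  assert (Hg : forall x, c' < x -> V1 (g x) /\ Fh (g x) = a * x).
  { intros x Hx. destruct (Hex x Hx) as [y [Hy1 Hy2]].
    assert (E : g x = y).
    { unfold g. apply lub_single. intros z. split.
      - intros [Hz1 Hz2]. apply Huniq; auto. lra.
      - intros ->. auto. }
    rewrite E. auto. }
  assert (Hgc : forall x0, c' < x0 -> continuous g x0).
  { intros x0 Hx0. apply eps_cont. intros e He0.
    destruct (Hg x0 Hx0) as [[Hy01 Hy02] Hy03].
    set (y0 := g x0) in *.
    set (y1 := Rmax (y0 - e) (y0 / 2)).
    set (y2 := Rmin (y0 + e) ((y0 + b') / 2)).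
    assert (Hy1a : y0 - e <= y1) by apply Rmax_l.
    assert (Hy1b : y0 / 2 <= y1) by apply Rmax_r.
    assert (Hy1c : y1 < y0) by (unfold y1; apply Rmax_lub_lt; lra).
    assert (Hy2a : y2 <= y0 + e) by apply Rmin_l.
    assert (Hy2b : y2 <= (y0 + b') / 2) by apply Rmin_r.
    assert (Hy2c : y0 < y2) by (unfold y2; apply Rmin_glb_lt; lra).
    assert (HF1' : a * x0 < Fh y1) by (rewrite <- Hy03; apply Hdec; lra).
    assert (HF2' : Fh y2 < a * x0) by (rewrite <- Hy03; apply Hdec; lra).
    set (d1 := (Fh y1 - a * x0) / a). set (d2 := (a * x0 - Fh y2) / a).
    assert (Hd1 : 0 < d1) by (unfold d1; apply Rdiv_lt_0_compat; lra).
    assert (Hd2 : 0 < d2) by (unfold d2; apply Rdiv_lt_0_compat; lra).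
    exists (Rmin (Rmin d1 d2) (x0 - c')). split.
    { apply Rmin_pos. apply Rmin_pos; auto. lra. }
    intros x Hx.
    assert (Hm1 := Rmin_l (Rmin d1 d2) (x0 - c')). assert (Hm2 := Rmin_r (Rmin d1 d2) (x0 - c')).
    assert (Hm3 := Rmin_l d1 d2). assert (Hm4 := Rmin_r d1 d2).
    apply Rabs_def2 in Hx. destruct Hx as [Hxa Hxb].
    assert (Hxc : c' < x) by lra.
    assert (E1 : a * d1 = Fh y1 - a * x0) by (unfold d1; field; lra).
    assert (E2 : a * d2 = a * x0 - Fh y2) by (unfold d2; field; lra).
    assert (Hax1 : a * x < Fh y1).
    { assert (a * (x - x0) < a * d1) by (apply Rmult_lt_compat_l; lra). lra. }
    assert (Hax2 : Fh y2 < a * x).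
    { assert (a * (x0 - x) < a * d2) by (apply Rmult_lt_compat_l; lra). lra. }
    destruct (Hg x Hxc) as [[Hgx1 Hgx2] Hgx3].
    assert (L1 : y1 < g x).
    { destruct (Rlt_or_le y1 (g x)) as [H|H]; auto. exfalso.
      destruct H as [H|H].
      - assert (Fh y1 < Fh (g x)) by (apply Hdec; lra). lra.
      - assert (Fh y1 = Fh (g x)) by (rewrite H; reflexivity). lra. }
    assert (L2 : g x < y2).
    { destruct (Rlt_or_le (g x) y2) as [H|H]; auto. exfalso.
      destruct H as [H|H].
      - assert (Fh (g x) < Fh y2) by (apply Hdec; lra). lra.
      - assert (Fh (g x) = Fh y2) by (rewrite H; reflexivity). lra. }
    apply Rabs_def1; lra. }
  exists g, (1 - c'). split; [lra|]. split; [|split].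
  - intros x Hx. destruct (next_char a f x Ha HP Hx) as (A1 & _ & A3 & _).
    destruct (Hg x ltac:(lra)) as [G1 G2].
    apply Huniq; auto. unfold V1, b'; lra. rewrite G2, Heq; auto.
  - intros x Hx. destruct (Hg x ltac:(lra)) as [[G1 _] _]. auto.
  - apply (Cinf_inverse (fun y => / a * Fh y) g V1); auto.
    + apply open_gt.
    + intro n. apply Ck_mult; auto. apply Ck_const; auto.
      apply (Ck_sub V0); auto.
    + intros y Hy. rewrite Derive_scal. fold D.
      assert (D y < 0) by auto. assert (0 < / a) by (apply Rinv_0_lt_compat; lra). nra.
    + intros x Hx. apply Hg. lra.
    + intros x Hx. destruct (Hg x ltac:(lra)) as [_ G2]. rewrite G2. field. lra.
    + intros x Hx. apply Hgc. lra.
Qed.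

Lemma Pinv_next a f : 0 < a <= 1 -> Pinv a f -> Pinv a (next_f a f).
Proof.
  intros Ha HP. split; [|split; [|split; [|split; [|split; [|split]]]]].
  - intros x Hx. destruct (next_char a f x Ha HP Hx) as (A1 & A2 & _). lra.
  - intros x Hx. apply next_P1'; auto.
  - apply next_P2; auto.
  - intros u v Hu Huv. apply next_P3; auto.
  - intros u v Hu Huv. destruct (Req_dec u v) as [E|E]. subst; lra.
    left. apply next_mono_strict; auto. lra.
  - intros u v X Hu Huv HvX. apply next_P6; auto.
  - apply next_P4; auto.
Qed.

Lemma Pinv_0 a : 0 < a <= 1 -> Pinv a (fun _ => 1).
Proof.
  intros Ha. split; [|split; [|split; [|split; [|split; [|split]]]]].
  - intros x Hx. cbv beta. split; [|lra]. rewrite <- Rinv_1. apply Rinv_le_contravar; lra.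
  - intros x Hx. cbv beta. assert (H : / x < / 1) by (apply Rinv_lt_contravar; lra).
    rewrite Rinv_1 in H; exact H.
  - reflexivity.
  - intros u v Hu Huv. unfold Gf. nra.
  - intros; lra.
  - intros u v X Hu Huv HvX. rewrite Rinv_1. nra.
  - exists (fun _ => 1), (1/2). split. lra. split. auto. split. intros; lra.
    intro n. apply Ck_const. apply open_gt.
Qed.

Lemma Pinv_all a k : 0 < a <= 1 -> Pinv a (fseq a k).
Proof.
  intros Ha. induction k. apply Pinv_0; auto. simpl. apply Pinv_next; auto.
Qed.

Lemma part0 a k x : 0 < a <= 1 -> 1 <= x ->
  is_max_of (sol_set a (fseq a k) x) (fseq a (S k) x).
Proof.
  intros Ha Hx. simpl. destruct (next_char a (fseq a k) x Ha (Pinv_all a k Ha) Hx) as (A1 & A2 & A3 & A4).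
  split. split; auto. intros z Hz. rewrite (A4 z Hz). lra.
Qed.

Lemma next_lim a f : 0 < a <= 1 -> Pinv a f -> is_lim (next_f a f) p_infty 0.
Proof.
  intros Ha HP. apply is_lim_spec. intros eps. simpl.
  set (y0 := Rmin (eps / 2) 1).
  assert (Hy0 : 0 < y0 <= 1).
  { unfold y0. split. apply Rmin_pos. assert (H := cond_pos eps). lra. lra. apply Rmin_r. }
  assert (Hy0e : y0 < eps) by (unfold y0; assert (H := Rmin_l (eps/2) 1); assert (H' := cond_pos eps); lra).
  exists (Rmax 1 (Fk a f y0 / a)). intros x Hx.
  assert (Hx1 : 1 < x) by (eapply Rle_lt_trans; [apply Rmax_l|exact Hx]).
  assert (Hx2 : Fk a f y0 / a < x) by (eapply Rle_lt_trans; [apply Rmax_r|exact Hx]).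
  destruct (next_char a f x Ha HP ltac:(lra)) as (A1 & _ & A3 & _).
  rewrite Rminus_0_r, Rabs_pos_eq by lra.
  destruct (Rlt_or_le (next_f a f x) y0) as [H|H]; [lra|].
  exfalso. assert (H' := F_dec a f y0 (next_f a f x) Ha HP ltac:(lra) H ltac:(lra)).
  rewrite A3 in H'.
  assert (a * (Fk a f y0 / a) < a * x) by (apply Rmult_lt_compat_l; lra).
  replace (a * (Fk a f y0 / a)) with (Fk a f y0) in H0 by (field; lra).
  lra.
Qed.

Lemma partA a k : 0 < a <= 1 -> (1 <= k)%nat ->
     (forall x y, 1 <= x -> x < y -> fseq a k y < fseq a k x) /\
     smooth_on_Ici1 (fseq a k) /\
     fseq a k 1 = 1 /\
     is_lim (fseq a k) p_infty 0 /\
     (forall x, 1 < x -> / x < fseq a k x).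
Proof.
  intros Ha Hk. destruct k as [|k]; [lia|]. simpl.
  assert (HP := Pinv_all a k Ha).
  split; [|split; [|split; [|split]]].
  - intros x y Hx Hxy. apply next_mono_strict; auto.
  - destruct (next_P4 a (fseq a k) Ha HP) as (h & eps & He & Hh & Hpos & Hc).
    exists h, eps. split; [lra|]. split; auto.
    intros n x Hx. apply (Hc n n x); auto.
  - apply next_P2; auto.
  - apply next_lim; auto.
  - intros x Hx. apply next_P1'; auto.
Qed.

Lemma partB a k : 0 < a <= 1 ->
     (forall y z, 0 < y -> y < z -> z <= 1 -> Fseq a k z < Fseq a k y) /\
     smooth_on_Ioc01 (Fseq a k) /\
     filterlim (Fseq a k) (at_right 0) (Rbar_locally p_infty) /\
     Fseq a k 1 = a.
Proof.
  intros Ha. assert (HP := Pinv_all a k Ha). unfold Fseq.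
  split; [|split; [|split]].
  - intros y z Hy Hyz Hz. apply F_strict; auto.
  - assert (HP' := HP). destruct HP' as (_ & _ & _ & _ & _ & _ & h & eps & He & Hh & Hpos & Hc).
    exists (Fk a h), (/ (1 - eps) - 1).
    assert (Hb : 1 < / (1 - eps)) by (rewrite <- Rinv_1; apply Rinv_lt_contravar; lra).
    split; [lra|]. split.
    + intros y Hy. apply Fh_eq; auto.
    + intros n y Hy. apply (Fh_smooth a h eps He Hpos Hc n n y); auto. lra.
  - intros P [M HM].
    set (d := Rmin 1 (a / (Rabs M + 1))).
    assert (HM0 : 0 < Rabs M + 1) by (assert (H := Rabs_pos M); lra).
    assert (Hd : 0 < d) by (apply Rmin_pos; [lra| apply Rdiv_lt_0_compat; lra]).
    exists (mkposreal d Hd). intros y Hy Hy0. simpl in Hy0.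
    assert (Hy' : Rabs (y - 0) < d) by exact Hy.
    rewrite Rminus_0_r, Rabs_pos_eq in Hy' by lra.
    assert (Hd1 := Rmin_l 1 (a / (Rabs M + 1))). assert (Hd2 := Rmin_r 1 (a / (Rabs M + 1))).
    apply HM.
    assert (HF := F_lower a (fseq a k) y Ha HP ltac:(unfold d in *; lra)).
    assert (H1 : y * (Rabs M + 1) < a).
    { assert (y < a / (Rabs M + 1)) by (unfold d in *; lra).
      apply (Rmult_lt_compat_r (Rabs M + 1)) in H; auto.
      replace (a / (Rabs M + 1) * (Rabs M + 1)) with a in H by (field; lra). lra. }
    assert (H2 : Rabs M + 1 < a / y).
    { apply (Rmult_lt_reg_r y); auto. replace (a / y * y) with a by (field; lra). lra. }
    assert (H3 := Rle_abs M). lra.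
  - apply F_one; auto.
Qed.

Lemma partC a k : 0 < a <= 1 -> forall x, 1 < x -> fseq a (S k) x < fseq a k x.
Proof.
  intros Ha. induction k; intros x Hx.
  - simpl. destruct (next_char a (fun _ => 1) x Ha (Pinv_0 a Ha) ltac:(lra)) as (A1 & _ & A3 & _).
    destruct A1 as [A1 [A2|A2]]; auto. exfalso. rewrite A2 in A3.
    rewrite (F_one a (fun _ => 1) (Pinv_0 a Ha)) in A3. nra.
  - assert (HP0 := Pinv_all a k Ha). assert (HP1 := Pinv_all a (S k) Ha).
    change (fseq a (S (S k)) x) with (next_f a (fseq a (S k)) x).
    assert (E1 : fseq a (S k) x = next_f a (fseq a k) x) by reflexivity.
    destruct (next_char a (fseq a k) x Ha HP0 ltac:(lra)) as (A1 & _ & A3 & _).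
    rewrite <- E1 in A1, A3.
    assert (Hy1 : fseq a (S k) x < 1).
    { assert (H := IHk x Hx). assert (HP0' := HP0). destruct HP0' as [P1 _]. destruct (P1 x ltac:(lra)). lra. }
    set (y := fseq a (S k) x) in *.
    assert (Hu : 1 < / y).
    { destruct A1 as [A1a A1b]. assert (Hq := Rinv_lt_contravar y 1 ltac:(lra) Hy1). rewrite Rinv_1 in Hq. exact Hq. }
    assert (HG : Gf a (fseq a (S k)) (/ y) < Gf a (fseq a k) (/ y)).
    { unfold Gf. assert (H := IHk (/ y) Hu).
      assert (H0 := f_pos a _ (/ y) HP1 ltac:(lra)).
      assert (H2 := Psi_lt a _ _ ltac:(lra) H0 H). lra. }
    assert (HF : Fk a (fseq a (S k)) y < a * x).
    { rewrite F_form in A3 |- * by lra. lra. }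
    destruct (next_char a (fseq a (S k)) x Ha HP1 ltac:(lra)) as (B1 & _ & B3 & _).
    destruct (Rlt_or_le (next_f a (fseq a (S k)) x) y) as [H|H]; auto. exfalso.
    assert (H' := F_dec a (fseq a (S k)) y (next_f a (fseq a (S k)) x) Ha HP1 ltac:(lra) H ltac:(lra)).
    lra.
Qed.

Lemma decr1 a k x : 0 < a <= 1 -> 1 <= x -> fseq a (S k) x <= fseq a k x.
Proof.
  intros Ha Hx. destruct (Req_dec x 1) as [E|E].
  - subst. assert (H1 := Pinv_all a (S k) Ha). assert (H0 := Pinv_all a k Ha).
    destruct H1 as (_ & _ & A & _). destruct H0 as (_ & _ & B & _). lra.
  - left. apply partC; auto. lra.
Qed.

Lemma decrk a n k x : 0 < a <= 1 -> 1 <= x -> (k <= n)%nat -> fseq a n x <= fseq a k x.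
Proof.
  intros Ha Hx Hkn. induction Hkn. lra.
  eapply Rle_trans; [apply decr1; auto| exact IHHkn].
Qed.

Definition Lx (a x : R) : R := real (Lim_seq (fun k => fseq a k x)).

Lemma fbounds a k x : 0 < a <= 1 -> 1 <= x -> / x <= fseq a k x <= 1.
Proof. intros Ha Hx. destruct (Pinv_all a k Ha) as [P1 _]. auto. Qed.

Lemma L_spec a x : 0 < a <= 1 -> 1 <= x ->
  is_lim_seq (fun k => fseq a k x) (Lx a x) /\ / x <= Lx a x <= 1 /\
  (forall k, Lx a x <= fseq a k x).
Proof.
  intros Ha Hx.
  assert (Hl : is_lim_seq (fun k => fseq a k x) (Lx a x)).
  { unfold Lx. apply Lim_seq_correct'. apply (ex_finite_lim_seq_decr _ (/ x)).
    intros n. apply decr1; auto. intros n. apply fbounds; auto. }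
  split; auto. split.
  - split.
    + assert (H := is_lim_seq_le (fun _ => / x) (fun k => fseq a k x) (/ x) (Lx a x)).
      simpl in H. apply H; auto. intros n; apply fbounds; auto. apply is_lim_seq_const.
    + assert (H := is_lim_seq_le (fun k => fseq a k x) (fun _ => 1) (Lx a x) 1).
      simpl in H. apply H; auto. intros n; apply fbounds; auto. apply is_lim_seq_const.
  - intros k. assert (H := is_lim_seq_le_loc (fun n => fseq a n x) (fun _ => fseq a k x) (Lx a x) (fseq a k x)).
    simpl in H. apply H; auto. exists k. intros n Hn. apply decrk; auto. apply is_lim_seq_const.
Qed.

Definition Px (a x : R) : R := / Lx a x.

Lemma Lpos a x : 0 < a <= 1 -> 1 <= x -> 0 < Lx a x.
Proof.
  intros Ha Hx. destruct (L_spec a x Ha Hx) as (_ & [H _] & _).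
  assert (0 < / x) by (apply Rinv_0_lt_compat; lra). lra.
Qed.

Lemma P_lim a x : 0 < a <= 1 -> 1 <= x -> is_lim_seq (fun k => / fseq a k x) (Px a x).
Proof.
  intros Ha Hx. destruct (L_spec a x Ha Hx) as (H & _).
  assert (H0 := Lpos a x Ha Hx).
  assert (H1 := is_lim_seq_inv _ _ H). simpl in H1. apply H1.
  intro E. injection E. lra.
Qed.

Lemma P_bounds a x : 0 < a <= 1 -> 1 <= x -> 1 <= Px a x <= x.
Proof.
  intros Ha Hx. destruct (L_spec a x Ha Hx) as (_ & [H1 H2] & _).
  assert (H0 := Lpos a x Ha Hx). unfold Px. split.
  - rewrite <- Rinv_1. apply Rinv_le_contravar; lra.
  - replace x with (/ / x) at 2 by (field; lra). apply Rinv_le_contravar; auto.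
    apply Rinv_0_lt_compat; lra.
Qed.

Lemma Lip_k a k u v X : 0 < a <= 1 -> 1 <= u -> u <= v -> v <= X ->
  (/ fseq a k v - / fseq a k u) * (/ (X * X) + 1 - a) <= a * (v - u).
Proof. intros Ha. destruct (Pinv_all a k Ha) as (_ & _ & _ & _ & _ & P6 & _). auto. Qed.

Lemma mono_k a k u v : 0 < a <= 1 -> 1 <= u -> u <= v -> fseq a k v <= fseq a k u.
Proof. intros Ha. destruct (Pinv_all a k Ha) as (_ & _ & _ & _ & P5 & _). auto. Qed.

Definition Ginf (a u : R) : R := Lx a u - (1 - a) / Lx a u + a * u.

Lemma lim_comb (A B C : nat -> R) (la lb lc c : R) :
  is_lim_seq A la -> is_lim_seq B lb -> is_lim_seq C lc ->
  is_lim_seq (fun k => A k - c * B k + C k) (la - c * lb + lc).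
Proof.
  intros HA HB HC.
  apply (is_lim_seq_plus' (fun k => A k - c * B k) C); auto.
  apply (is_lim_seq_minus' A (fun k => c * B k)); auto.
  assert (H := is_lim_seq_scal_l B c lb HB). simpl in H. exact H.
Qed.

Lemma lim_inv (A : nat -> R) (l : R) : is_lim_seq A l -> l <> 0 -> is_lim_seq (fun k => / A k) (/ l).
Proof.
  intros H Hl. assert (H1 := is_lim_seq_inv _ _ H). simpl in H1. apply H1.
  intro E. injection E. auto.
Qed.

Lemma F3 a x : 0 < a <= 1 -> 1 <= x -> Ginf a x = Ginf a (Px a x).
Proof.
  intros Ha Hx.
  destruct (L_spec a x Ha Hx) as (HL & [HL1 HL2] & HL3).
  assert (HLp := Lpos a x Ha Hx).
  assert (HPb := P_bounds a x Ha Hx).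
  set (p := Px a x) in *.
  destruct (L_spec a p Ha ltac:(lra)) as (HLp' & [HLp1 HLp2] & HLp3).
  assert (HLpp := Lpos a p Ha ltac:(lra)).
  set (pp := Px a p).
  assert (HPPb := P_bounds a p Ha ltac:(lra)).
  assert (HA : is_lim_seq (fun k => fseq a (S k) x) (Lx a x)) by (apply (is_lim_seq_incr_1 (fun k => fseq a k x)); auto).
  assert (HB : is_lim_seq (fun k => / fseq a (S k) x) p).
  { apply (is_lim_seq_incr_1 (fun k => / fseq a k x)). apply P_lim; auto. }
  assert (Hs1 : is_lim_seq (fun k => Gf a (fseq a (S k)) x) (Ginf a x)).
  { eapply is_lim_seq_ext.
    2: apply (lim_comb _ _ _ _ _ _ (1 - a) HA HB (is_lim_seq_const (a * x))).
    intros k. unfold Gf, Rdiv. ring. }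
  set (v := fun k => / fseq a (S k) x).
  set (w := fun k => / fseq a k (v k)).
  assert (Hv : forall k, 1 <= v k <= p).
  { intros k. unfold v, p, Px. destruct (fbounds a (S k) x Ha Hx).
    assert (0 < / x) by (apply Rinv_0_lt_compat; lra).
    split. rewrite <- Rinv_1. apply Rinv_le_contravar; lra.
    apply Rinv_le_contravar; auto. }
  set (c := / (x * x) + 1 - a).
  assert (Hc : 0 < c).
  { unfold c. assert (0 < / (x * x)) by (apply Rinv_0_lt_compat; nra). lra. }
  assert (Hw : forall k, / fseq a k p - a * (p - v k) / c <= w k <= / fseq a k p).
  { intros k. destruct (Hv k) as [Hv1 Hv2]. unfold w. split.
    - assert (H := Lip_k a k (v k) p x Ha Hv1 Hv2 ltac:(lra)). fold c in H.
      apply (Rmult_le_reg_r c); auto. unfold Rdiv.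
      assert (Hcc : / c * c = 1) by (apply Rinv_l; lra).
      replace ((/ fseq a k p - a * (p - v k) * / c) * c) with (/ fseq a k p * c - a * (p - v k)) by (rewrite Rmult_minus_distr_r, Rmult_assoc, Hcc; ring).
      lra.
    - assert (H := mono_k a k (v k) p Ha Hv1 Hv2).
      destruct (fbounds a k p Ha ltac:(lra)).
      assert (0 < / p) by (apply Rinv_0_lt_compat; lra).
      apply Rinv_le_contravar; lra. }
  assert (HU : is_lim_seq (fun k => / fseq a k p) pp) by (apply P_lim; lra).
  assert (HV : is_lim_seq v p) by exact HB.
  assert (HLow : is_lim_seq (fun k => / fseq a k p - a * (p - v k) / c) pp).
  { replace (Finite pp) with (Finite (pp - a * (p - p) / c)) by (f_equal; field; lra).
    apply (is_lim_seq_minus' _ (fun k => a * (p - v k) / c)); auto.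
    apply (is_lim_seq_ext (fun k => (a / c) * (p - v k))). intros; unfold Rdiv; ring.
    replace (a * (p - p) / c) with ((a / c) * (p - p)) by (unfold Rdiv; ring).
    assert (H := is_lim_seq_scal_l (fun k => p - v k) (a / c) (p - p)). simpl in H. apply H.
    apply (is_lim_seq_minus' (fun _ => p) v); auto. apply is_lim_seq_const. }
  assert (HW : is_lim_seq w pp) by (apply (is_lim_seq_le_le _ _ _ pp Hw); auto).
  assert (Hpp0 : pp <> 0) by (unfold pp; lra).
  assert (HWi : is_lim_seq (fun k => / w k) (/ pp)) by (apply lim_inv; auto).
  assert (Hs2 : is_lim_seq (fun k => Gf a (fseq a (S k)) x) (/ pp - (1 - a) * pp + a * p)).
  { eapply is_lim_seq_ext.
    2: apply (lim_comb _ _ _ _ _ _ (1 - a) HWi HW (is_lim_seq_scal_l v a p HV)).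
    intros k. simpl. rewrite next_G; [|auto|apply Pinv_all; auto|auto]. fold (fseq a (S k)).
    unfold Gf, w, v, Rdiv. simpl. rewrite Rinv_inv. ring. }
  assert (E := is_lim_seq_unique _ _ Hs1). rewrite (is_lim_seq_unique _ _ Hs2) in E.
  injection E. intros E'. rewrite <- E'.
  unfold Ginf. unfold pp, Px. rewrite Rinv_inv. unfold Rdiv. ring.
Qed.

Lemma Ginf_P a u : 0 < a <= 1 -> 1 <= u -> Ginf a u = / Px a u - (1 - a) * Px a u + a * u.
Proof.
  intros Ha Hu. assert (H := Lpos a u Ha Hu). unfold Ginf, Px. rewrite Rinv_inv. unfold Rdiv. ring.
Qed.

Lemma iter_limit a x : 0 < a <= 1 -> 1 <= x ->
  exists us, 1 <= us <= x /\ Ginf a x = / us - (1 - a) * us + a * us.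
Proof.
  intros Ha Hx.
  set (it := fun n => Nat.iter n (Px a) x).
  assert (Hit : forall n, (1 <= it n <= x /\ it (S n) <= it n) /\ Ginf a (it n) = Ginf a x).
  { induction n.
    - simpl. assert (H := P_bounds a x Ha Hx). split; [split|]; lra.
    - destruct IHn as [[[H1 H2] H3] H4].
      assert (E : it (S n) = Px a (it n)) by reflexivity.
      assert (E2 : it (S (S n)) = Px a (it (S n))) by reflexivity.
      assert (HB := P_bounds a (it n) Ha H1).
      split; [split|].
      + lra.
      + rewrite E2. assert (HB2 := P_bounds a (it (S n)) Ha ltac:(lra)). lra.
      + rewrite E, <- F3; auto. }
  assert (Hl : ex_finite_lim_seq it).
  { apply (ex_finite_lim_seq_decr _ 1). intros n; apply Hit. intros n; apply Hit. }
  destruct Hl as [us Hus].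
  assert (Hb1 : 1 <= us).
  { assert (H := is_lim_seq_le (fun _ => 1) it 1 us). simpl in H. apply H; auto.
    intros n; apply Hit. apply is_lim_seq_const. }
  assert (Hb2 : us <= x).
  { assert (H := is_lim_seq_le it (fun _ => x) us x). simpl in H. apply H; auto.
    intros n; apply Hit. apply is_lim_seq_const. }
  exists us. split; [lra|].
  assert (HS : is_lim_seq (fun n => it (S n)) us) by (apply (is_lim_seq_incr_1 it); auto).
  assert (HSi : is_lim_seq (fun n => / it (S n)) (/ us)) by (apply lim_inv; auto; lra).
  assert (Hc := lim_comb _ _ _ _ _ _ (1 - a) HSi HS (is_lim_seq_scal_l it a us Hus)).
  assert (Hc2 : is_lim_seq (fun n => / it (S n) - (1 - a) * it (S n) + a * it n) (Ginf a x)).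
  { apply (is_lim_seq_ext (fun _ => Ginf a x)). 2: apply is_lim_seq_const.
    intros n. destruct (Hit n) as [[[H1 _] _] H4]. rewrite <- H4. rewrite Ginf_P; auto. }
  assert (E := is_lim_seq_unique _ _ Hc2). rewrite (is_lim_seq_unique _ _ Hc) in E.
  injection E. auto.
Qed.

Lemma Ginf_lower a x : 0 < a <= 1 -> 1 <= x ->
  2 * a <= Ginf a x /\ / x - (1 - a) * x + a * x <= Ginf a x.
Proof.
  intros Ha Hx. destruct (L_spec a x Ha Hx) as (HL & [HL1 HL2] & _).
  assert (HLp := Lpos a x Ha Hx).
  split.
  - assert (Hli : is_lim_seq (fun k => / fseq a k x) (/ Lx a x)) by (apply lim_inv; auto; lra).
    assert (Hc := lim_comb _ _ _ _ _ _ (1 - a) HL Hli (is_lim_seq_const (a * x))).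
    assert (H := is_lim_seq_le (fun _ => 2 * a) (fun k => fseq a k x - (1 - a) * / fseq a k x + a * x) (2 * a) (Lx a x - (1 - a) * / Lx a x + a * x)).
    simpl in H. unfold Ginf, Rdiv. apply H.
    + intros k. assert (HP := Pinv_all a k Ha). rewrite <- (G1 a _ HP).
      destruct HP as (_ & _ & _ & P3 & _). apply (P3 1 x); lra.
    + apply is_lim_seq_const.
    + exact Hc.
  - assert (H0 : 0 < / x) by (apply Rinv_0_lt_compat; lra).
    assert (H := Psi_le a (/ x) (Lx a x) ltac:(lra) H0 HL1).
    replace ((1 - a) / / x) with ((1 - a) * x) in H by (field; lra).
    unfold Ginf. lra.
Qed.

Lemma phi_conv a u x : 0 < a <= 1 -> 1 <= u -> u <= x ->
  / u - (1 - a) * u + a * u <= Rmax (2 * a) (/ x - (1 - a) * x + a * x).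
Proof.
  intros Ha Hu Hux.
  destruct (Rle_or_lt (2 * a - 1) (/ u)) as [H|H].
  - eapply Rle_trans; [|apply Rmax_l].
    assert (E : / u - (1 - a) * u + a * u - 2 * a = (u - 1) * (2 * a - 1 - / u)) by (field; lra).
    assert ((u - 1) * (2 * a - 1 - / u) <= 0) by nra.
    lra.
  - eapply Rle_trans; [|apply Rmax_r].
    assert (E : / u - (1 - a) * u + a * u - (/ x - (1 - a) * x + a * x) = (u - x) * (2 * a - 1 - / (u * x))) by (field; lra).
    assert (I : / (u * x) <= / u).
    { apply Rinv_le_contravar; nra. }
    assert ((u - x) * (2 * a - 1 - / (u * x)) <= 0) by nra.
    lra.
Qed.

Lemma quad a x s q : 0 < a <= 1 ->  0 < s ->
  q = (a * (2 - x) + sqrt (a ^ 2 * (2 - x) ^ 2 + 4 * (1 - a))) / 2 ->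
  (s * s - a * (2 - x) * s - (1 - a) = 0 -> s = q) /\
  (0 <= s * s - a * (2 - x) * s - (1 - a) -> q <= s).
Proof.
  intros Ha Hs Hq.
  set (B := a * (2 - x)) in *.
  set (r := sqrt (a ^ 2 * (2 - x) ^ 2 + 4 * (1 - a))) in *.
  assert (Hr0 : 0 <= r) by apply sqrt_pos.
  assert (Hr2 : r * r = B * B + 4 * (1 - a)).
  { unfold r. rewrite sqrt_sqrt. unfold B; ring.
    assert (0 <= a ^ 2 * (2 - x) ^ 2) by (apply Rmult_le_pos; apply pow2_ge_0). lra. }
  assert (HrB : B <= r) by nra.
  assert (Fac : s * s - B * s - (1 - a) = (s - q) * (s - (B - r) / 2)) by (rewrite Hq; fold B r; nra).
  assert (Hpos : 0 < s - (B - r) / 2) by lra.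
  split.
  - intros E. rewrite Fac in E. apply Rmult_integral in E. destruct E; lra.
  - intros E. rewrite Fac in E. destruct (Rle_or_lt q s) as [H|H]; auto.
    assert ((s - q) * (s - (B - r) / 2) < 0) by (apply Rmult_neg_pos; lra). lra.
Qed.

Lemma partD a x : 0 < a <= 1 -> 1 <= x -> is_lim_seq (fun k => fseq a k x) (f_inf a x).
Proof.
  intros Ha Hx.
  destruct (L_spec a x Ha Hx) as (HL & [HL1 HL2] & _).
  assert (HLp := Lpos a x Ha Hx).
  destruct (iter_limit a x Ha Hx) as [us [Hus HG]].
  assert (Hc := phi_conv a us x Ha ltac:(lra) ltac:(lra)).
  destruct (Ginf_lower a x Ha Hx) as [G1 G2].
  set (q := (a * (2 - x) + sqrt (a ^ 2 * (2 - x) ^ 2 + 4 * (1 - a))) / 2).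
  destruct (quad a x (Lx a x) q Ha HLp eq_refl) as [Q1 Q2].
  assert (EG : Ginf a x = Lx a x - (1 - a) / Lx a x + a * x) by reflexivity.
  assert (Equad : Lx a x * Lx a x - a * (2 - x) * Lx a x - (1 - a) = Lx a x * (Ginf a x - 2 * a)).
  { rewrite EG. field. lra. }
  assert (Hq : q <= Lx a x).
  { apply Q2. rewrite Equad. apply Rmult_le_pos; lra. }
  assert (Hx0 : 0 < / x) by (apply Rinv_0_lt_compat; lra).
  replace (f_inf a x) with (Lx a x); auto.
  unfold f_inf. fold q.
  destruct (Rle_or_lt (/ x - (1 - a) * x + a * x) (2 * a)) as [H|H].
  - rewrite Rmax_left in Hc by lra.
    assert (E : Lx a x = q) by (apply Q1; rewrite Equad; nra).
    rewrite Rmax_right; lra.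
  - rewrite Rmax_right in Hc by lra.
    assert (E : Lx a x = / x).
    { apply (Psi_inj a); auto; try lra.
      replace ((1 - a) / / x) with ((1 - a) * x) by (field; lra). lra. }
    rewrite Rmax_left; lra.
Qed.


Theorem proposition1 (alpha : R) (Ha : 0 < alpha <= 1) :
  (* well-definedness: for x >= 1 the max defining f_{k+1}(x) exists *)
  (forall (k : nat) (x : R), 1 <= x ->
     is_max_of (sol_set alpha (fseq alpha k) x) (fseq alpha (S k) x)) /\
  (* (a) *)
  (forall k : nat, (1 <= k)%nat ->
     (forall x y, 1 <= x -> x < y -> fseq alpha k y < fseq alpha k x) /\
     smooth_on_Ici1 (fseq alpha k) /\
     fseq alpha k 1 = 1 /\
     is_lim (fseq alpha k) p_infty 0 /\
     (forall x, 1 < x -> / x < fseq alpha k x)) /\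
  (* (b) *)
  (forall k : nat,
     (forall y z, 0 < y -> y < z -> z <= 1 -> Fseq alpha k z < Fseq alpha k y) /\
     smooth_on_Ioc01 (Fseq alpha k) /\
     filterlim (Fseq alpha k) (at_right 0) (Rbar_locally p_infty) /\
     Fseq alpha k 1 = alpha) /\
  (* (c) *)
  (forall (k : nat) (x : R), 1 < x -> fseq alpha (S k) x < fseq alpha k x) /\
  (* (d) *)
  (forall x : R, 1 <= x -> is_lim_seq (fun k => fseq alpha k x) (f_inf alpha x)).
Proof.
  split; [intros k x Hx; apply part0; auto|].
  split; [intros k Hk; apply partA; auto|].
  split; [intros k; apply partB; auto|].
  split; [intros k x Hx; apply partC; auto|].
  intros x Hx; apply partD; auto.
Qed.
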